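(* Let $\lambda$ be a cardinal, let $\langle P,\le\rangle$ and $\langle Q,\le\rangle$ be partially ordered sets and let $\varphi:P\to Q$ be a monotonic function. If $Q$ is $\lambda$-Noetherian and for every $q\in Q$ the fiber $\varphi^{-1}(\{q\})$ (with the induced order) is $\lambda$-Noetherian, then $P$ is $\lambda$-Noetherian.
   Context: A poset is Noetherian if it contains no infinite strictly increasing sequence. For a cardinal $\lambda$, a poset $\langle P,\le\rangle$ is $\lambda$-Noetherian if there is a function $f:P\to\lambda$ such that for every $\xi\in\lambda$ the subposet $f^{-1}(\{\xi\})$ with the restricted order is Noetherian. *)

(* Defs.v *)
(* A cardinal lambda is represented by a type L
   (standing for the set of ordinals below lambda; only its cardinality matters). *)

Definition is_partial_order {T : Type} (le : T -> T -> Prop) : Prop :=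
  (forall x, le x x) /\
  (forall x y, le x y -> le y x -> x = y) /\
  (forall x y z, le x y -> le y z -> le x z).

Definition strict {T : Type} (le : T -> T -> Prop) (x y : T) : Prop :=
  le x y /\ x <> y.

Definition Noetherian (T : Type) (le : T -> T -> Prop) : Prop :=
  ~ exists s : nat -> T, forall n, strict le (s n) (s (S n)).

Definition sub_le {T : Type} (A : T -> Prop) (le : T -> T -> Prop)
  (x y : {t : T | A t}) : Prop := le (proj1_sig x) (proj1_sig y).

Definition lambda_Noetherian (L : Type) (T : Type) (le : T -> T -> Prop) : Prop :=
  exists f : T -> L, forall xi : L,
    Noetherian {t : T | f t = xi} (sub_le (fun t => f t = xi) le).

Definition monotonic {P Q : Type} (leP : P -> P -> Prop) (leQ : Q -> Q -> Prop)
  (phi : P -> Q) : Prop := forall x y, leP x y -> leQ (phi x) (phi y).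

(* Main.v *)
Require Import Defs.
From Stdlib Require Import ClassicalEpsilon Classical Lia Arith.
From mathcomp Require classical_sets boolp.

Lemma Zorn_prop (T : Type) (t0 : T) (R : T -> T -> Prop) :
  (forall t, R t t) -> (forall r s t, R r s -> R s t -> R r t) ->
  (forall A : T -> Prop, (forall s t, A s -> A t -> R s t \/ R t s) ->
     exists t, forall s, A s -> R s t) ->
  exists t, forall s, R t s -> R s t.
Proof.
intros Hr Ht Hc.
assert (E : forall s t, boolp.asbool (R s t) = true <-> R s t).
{ intros s t. destruct (boolp.asboolP (R s t)); split; intros; auto; try discriminate; contradiction. }
destruct (classical_sets.ZL_preorder t0 (R:=fun s t => boolp.asbool (R s t))) as [t Ht0].
- intros x; apply E; auto.
- intros r s t H1 H2; apply E; apply E in H1; apply E in H2; eauto.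
- intros A HA. destruct (Hc A) as [t Htt].
  + intros s t As At. destruct (HA s t As At) as [h|h]; [left|right]; apply E; exact h.
  + exists t; intros s As; apply E; auto.
- exists t; intros s H. apply E. apply Ht0. apply E. exact H.
Qed.

Definition dec (P : Prop) : {P} + {~ P} := excluded_middle_informative P.

Definition inj {A B : Type} (f : A -> B) := forall x y, f x = f y -> x = y.

Lemma comparability (X Y : Type) :
  (exists h : X -> Y, inj h) \/ (exists h : Y -> X, inj h).
Proof.
destruct (classic (inhabited X)) as [[x0]|nX].
2:{ left. exists (fun x => match nX (inhabits x) with end). intros x; destruct (nX (inhabits x)). }
destruct (classic (inhabited Y)) as [[y0]|nY].
2:{ right. exists (fun y => match nY (inhabits y) with end). intros y; destruct (nY (inhabits y)). }
set (W := fun t : (X -> Prop) * (X -> Y) =>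
  forall x x', fst t x -> fst t x' -> snd t x = snd t x' -> x = x').
set (S := {t | W t}).
set (R := fun s t : S => (forall x, fst (proj1_sig s) x -> fst (proj1_sig t) x) /\
    (forall x, fst (proj1_sig s) x -> snd (proj1_sig t) x = snd (proj1_sig s) x)).
assert (W0 : W ((fun _ => False), (fun _ => y0))). { intros x x' []. }
destruct (Zorn_prop S (exist _ _ W0) R) as [[[D g] Wm] Hmax].
- intros t; split; auto.
- intros r s t [H1 H2] [H3 H4]; split; auto.
  intros x Hx. rewrite H4 by auto. auto.
- intros A HA.
  set (DU := fun x => exists t : S, A t /\ fst (proj1_sig t) x).
  set (gU := fun x => match dec (DU x) with
                     | left H => snd (proj1_sig (proj1_sig (constructive_indefinite_description _ H))) x
                     | right _ => y0 end).
  assert (key : forall t x, A t -> fst (proj1_sig t) x -> gU x = snd (proj1_sig t) x).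
  { intros t x At Dx. unfold gU. destruct (dec (DU x)) as [H|H].
    2:{ exfalso; apply H; exists t; auto. }
    destruct (constructive_indefinite_description _ H) as [t' [At' Dx']]. simpl.
    destruct (HA t t' At At') as [[h1 h2]|[h1 h2]]; auto. symmetry; auto. }
  assert (WU : W (DU, gU)).
  { intros x x' [t [At Dx]] [t' [At' Dx']] E. simpl in E.
    rewrite (key t x At Dx), (key t' x' At' Dx') in E.
    destruct t as [[Dt gt] Wt], t' as [[Dt' gt'] Wt']. simpl in *.
    destruct (HA _ _ At At') as [[h1 h2]|[h1 h2]]; simpl in *.
    - apply Wt'; simpl; auto. rewrite (h2 x) by auto. auto.
    - apply Wt; simpl; auto. rewrite E, (h2 x') by auto. auto. }
  exists (exist _ _ WU). intros t At. split; simpl.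
  + intros x Dx; exists t; auto.
  + intros x Dx. apply (key t x At Dx).
- simpl in *.
  destruct (classic (forall x, D x)) as [HD|HD].
  { left. exists g. intros x x' E. apply Wm; simpl; auto. }
  destruct (classic (forall y, exists x, D x /\ g x = y)) as [HR|HR].
  { right. exists (fun y => proj1_sig (constructive_indefinite_description _ (HR y))).
    intros y y' E.
    assert (K : forall z, g (proj1_sig (constructive_indefinite_description _ (HR z))) = z).
    { intros z. exact (proj2 (proj2_sig (constructive_indefinite_description _ (HR z)))). }
    rewrite <- (K y), <- (K y'), E. reflexivity. }
  exfalso.
  apply not_all_ex_not in HD as [x Hx].
  apply not_all_ex_not in HR as [y Hy].
  set (D' := fun z => D z \/ z = x).
  set (g' := fun z => if dec (z = x) then y else g z).
  assert (W' : W (D', g')).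
  { intros a b Ha Hb E. simpl in *. unfold g' in E.
    destruct (dec (a = x)), (dec (b = x)); subst; auto.
    - exfalso; apply Hy; exists b; destruct Hb; [auto|contradiction].
    - exfalso; apply Hy; exists a; destruct Ha; [auto|contradiction].
    - destruct Ha; [|contradiction]. destruct Hb; [|contradiction]. apply Wm; auto. }
  destruct (Hmax (exist _ _ W')) as [h1 _].
  + split; simpl.
    * intros z Dz; left; auto.
    * intros z Dz. unfold g'. destruct (dec (z = x)); subst; [contradiction|auto].
  + apply Hx. apply (h1 x). simpl. right; auto.
Qed.

From Stdlib Require Import Cantor ProofIrrelevance.

Lemma sig_inj {T} (P : T -> Prop) (x y : T) (hx : P x) (hy : P y) :
  x = y -> exist P x hx = exist P y hy.
Proof. intros ->. f_equal. apply proof_irrelevance. Qed.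

Lemma proj1_sig_inj {T} {P : T -> Prop} (u v : sig P) :
  proj1_sig u = proj1_sig v -> u = v.
Proof. destruct u, v; simpl; intros ->; f_equal; apply proof_irrelevance. Qed.

Lemma cid_spec {T} (P : T -> Prop) (H : exists x, P x) :
  P (proj1_sig (constructive_indefinite_description P H)).
Proof. exact (proj2_sig (constructive_indefinite_description P H)). Qed.

Lemma infinite_square (L : Type) (e : nat -> L) : inj e ->
  exists c : L * L -> L, inj c.
Proof.
intros He.
set (V := fun t : (L -> Prop) * (L * L -> L) =>
  (forall n, fst t (e n)) /\
  (forall a b, fst t a -> fst t b -> fst t (snd t (a, b))) /\
  (forall a b a' b', fst t a -> fst t b -> fst t a' -> fst t b' ->
     snd t (a, b) = snd t (a', b') -> a = a' /\ b = b')).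
set (S := {t | V t}).
set (R := fun s t : S => (forall x, fst (proj1_sig s) x -> fst (proj1_sig t) x) /\
    (forall a b, fst (proj1_sig s) a -> fst (proj1_sig s) b ->
       snd (proj1_sig t) (a, b) = snd (proj1_sig s) (a, b))).
set (A0 := fun x => exists n, e n = x).
set (einv := fun x => match dec (A0 x) with
   | left H => proj1_sig (constructive_indefinite_description _ H) | right _ => 0 end).
assert (Einv : forall n, einv (e n) = n).
{ intros n. unfold einv. destruct (dec (A0 (e n))) as [H|H].
  - apply He. apply (cid_spec _ H).
  - exfalso; apply H; exists n; auto. }
set (f0 := fun p : L * L => e (Cantor.to_nat (einv (fst p), einv (snd p)))).
assert (V0 : V (A0, f0)).
{ split; [|split]; simpl.
  - intros n; exists n; auto.
  - intros a b _ _. eexists; reflexivity.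
  - intros a b a' b' [i <-] [j <-] [i' <-] [j' <-] E. unfold f0 in E; cbn [fst snd] in E.
    apply He in E. rewrite !Einv in E.
    apply (f_equal Cantor.of_nat) in E. rewrite !Cantor.cancel_of_to in E. injection E; intros; subst; auto. }
destruct (Zorn_prop S (exist _ _ V0) R) as [[[A f] Vm] Hmax].
- intros t; split; auto.
- intros r s t [H1 H2] [H3 H4]; split; auto.
  intros a b Ha Hb. rewrite H4 by auto. auto.
- intros Ch HCh.
  destruct (classic (exists t, Ch t)) as [[t1 Ct1]|NE].
  2:{ exists (exist _ _ V0). intros s Cs; exfalso; apply NE; exists s; auto. }
  set (AU := fun x => exists t : S, Ch t /\ fst (proj1_sig t) x).
  set (fU := fun p : L * L => match dec (exists t : S, Ch t /\ fst (proj1_sig t) (fst p) /\ fst (proj1_sig t) (snd p)) with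
                     | left H => snd (proj1_sig (proj1_sig (constructive_indefinite_description _ H))) p
                     | right _ => f0 p end).
  assert (join : forall t t', Ch t -> Ch t' -> exists s, Ch s /\ R t s /\ R t' s).
  { intros t t' Ct Ct'. destruct (HCh t t' Ct Ct') as [h|h].
    - exists t'; split; [auto|split; [exact h|]]. unfold R; split; auto.
    - exists t; split; [auto|split; [|exact h]]. unfold R; split; auto. }
  assert (both : forall x y, AU x -> AU y -> exists s, Ch s /\ fst (proj1_sig s) x /\ fst (proj1_sig s) y).
  { intros x y [t [Ct Hx]] [t' [Ct' Hy]]. destruct (join t t' Ct Ct') as [s [Cs [h1 h2]]]. unfold R in h1, h2. destruct h1 as [h1 _], h2 as [h2 _].
    exists s; auto. }
  assert (key : forall t a b, Ch t -> fst (proj1_sig t) a -> fst (proj1_sig t) b -> fU (a, b) = snd (proj1_sig t) (a, b)).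
  { intros t a b Ct Ha Hb. unfold fU. destruct (dec _) as [H|H].
    2:{ exfalso; apply H; exists t; auto. }
    pose proof (cid_spec _ H) as [Ct' [Ha' Hb']]. simpl in Ha', Hb'.
    destruct (HCh t _ Ct Ct') as [[h1 h2]|[h1 h2]]; auto. symmetry; auto. }
  assert (VU : V (AU, fU)).
  { split; [|split]; simpl.
    - intros n. exists t1. split; auto. apply (proj2_sig t1).
    - intros a b Ha Hb. destruct (both a b Ha Hb) as [s [Cs [Ha' Hb']]].
      rewrite (key s a b Cs Ha' Hb'). exists s. split; auto. apply (proj2_sig s); auto.
    - intros a b a' b' Ha Hb Ha' Hb' E.
      destruct (both a b Ha Hb) as [s [Cs [Hsa Hsb]]].
      destruct (both a' b' Ha' Hb') as [s' [Cs' [Hsa' Hsb']]].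
      destruct (join s s' Cs Cs') as [u [Cu [r1 r2]]]. unfold R in r1, r2. destruct r1 as [r1 _], r2 as [r2 _].
      rewrite (key u a b Cu) in E by auto. rewrite (key u a' b' Cu) in E by auto.
      apply (proj2_sig u); auto. }
  exists (exist _ _ VU). intros t Ct. split; simpl.
  + intros x Hx; exists t; auto.
  + intros a b Ha Hb. apply (key t a b Ct Ha Hb).
- simpl in *.
  destruct Vm as [Vbase [Vcl Vinj]]; simpl in Vbase, Vcl, Vinj.
  assert (D01 : e 0 <> e 1) by (intros E; apply He in E; discriminate).
  assert (D02 : e 0 <> e 2) by (intros E; apply He in E; discriminate).
  assert (D12 : e 1 <> e 2) by (intros E; apply He in E; discriminate).
  destruct (comparability {x | ~ A x} {x | A x}) as [[h Hh]|[g Hg]].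
  + set (k := fun x => match dec (A x) with
           | left _ => (x, e 0)
           | right n => (proj1_sig (h (exist _ x n)), e 1) end).
    assert (kA : forall x, A (fst (k x)) /\ A (snd (k x))).
    { intros x; unfold k; destruct (dec (A x)); simpl; auto. split; auto. apply (proj2_sig (h _)). }
    assert (kinj : inj k).
    { intros x y E. unfold k in E. destruct (dec (A x)), (dec (A y)); injection E; intros; subst; auto;
        try contradiction; try (exfalso; apply D01; auto; fail).
      apply proj1_sig_inj, Hh in H. exact (f_equal (@proj1_sig _ _) H). }
    exists (fun p => f (f (k (fst p)), f (k (snd p)))).
    assert (kf : forall x, A (f (k x))).
    { intros x. rewrite (surjective_pairing (k x)). apply Vcl; apply kA. }
    assert (kf2 : forall x x', f (k x) = f (k x') -> x = x').
    { intros x x' E. rewrite (surjective_pairing (k x)), (surjective_pairing (k x')) in E.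
      apply Vinj in E as [E1 E2]; try apply kA.
      apply kinj. rewrite (surjective_pairing (k x)), (surjective_pairing (k x')), E1, E2. reflexivity. }
    intros [x y] [x' y'] E. simpl in E.
    apply Vinj in E as [E1 E2]; try apply kf.
    apply kf2 in E1, E2. subst. reflexivity.
  + exfalso.
    set (gg := fun a => match dec (A a) with
           | left H => proj1_sig (g (exist _ a H)) | right _ => a end).
    assert (ggA : forall a, A a -> ~ A (gg a)).
    { intros a Ha. unfold gg. destruct (dec (A a)); [|contradiction]. apply (proj2_sig (g _)). }
    assert (gginj : forall a b, A a -> A b -> gg a = gg b -> a = b).
    { intros a b Ha Hb E. unfold gg in E. destruct (dec (A a)), (dec (A b)); try contradiction.
      apply proj1_sig_inj, Hg in E. exact (f_equal (@proj1_sig _ _) E). }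
    set (D := fun x => exists a, A a /\ gg a = x).
    set (ginv := fun x => match dec (D x) with
           | left H => proj1_sig (constructive_indefinite_description _ H) | right _ => x end).
    assert (ginvD : forall x, D x -> A (ginv x) /\ gg (ginv x) = x).
    { intros x Dx. unfold ginv. destruct (dec (D x)); [|contradiction]. apply (cid_spec _ d). }
    set (gi := fun x => if dec (A x) then x else ginv x).
    assert (giA : forall x, A x \/ D x -> A (gi x)).
    { intros x Hx. unfold gi. destruct (dec (A x)); auto. destruct Hx; [contradiction|]. apply ginvD; auto. }
    assert (giinj : forall x x', A x \/ D x -> A x' \/ D x' -> (A x <-> A x') -> gi x = gi x' -> x = x').
    { intros x x' Hx Hx' Hiff E. unfold gi in E. destruct (dec (A x)), (dec (A x')); try tauto.
      destruct Hx; [contradiction|]. destruct Hx'; [contradiction|].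
      destruct (ginvD x H) as [_ <-]. destruct (ginvD x' H0) as [_ <-]. rewrite E. reflexivity. }
    set (tag := fun p : L * L => if dec (A (fst p)) then e 0 else if dec (A (snd p)) then e 1 else e 2).
    assert (tagA : forall p, A (tag p)).
    { intros p; unfold tag; destruct (dec _); [|destruct (dec _)]; auto. }
    assert (taginj : forall p p', ~ (A (fst p) /\ A (snd p)) -> ~ (A (fst p') /\ A (snd p')) ->
        tag p = tag p' -> (A (fst p) <-> A (fst p')) /\ (A (snd p) <-> A (snd p'))).
    { intros p p' N N' E. unfold tag in E.
      destruct (dec (A (fst p))), (dec (A (fst p'))), (dec (A (snd p))), (dec (A (snd p'))); try tauto;
      try (exfalso; congruence). }
    set (A' := fun x => A x \/ D x).
    set (f' := fun p : L * L => if dec (A (fst p) /\ A (snd p)) then f p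
                else gg (f (f (gi (fst p), gi (snd p)), tag p))).
    assert (ggD : forall a, A a -> D (gg a)). { intros a Ha; exists a; auto. }
    assert (V' : V (A', f')).
    { split; [|split]; simpl.
      - intros n; left; auto.
      - intros a b Ha Hb. unfold f'. destruct (dec _) as [[h1 h2]|N].
        + left; auto.
        + right. apply ggD. apply Vcl; [apply Vcl; apply giA; assumption | apply tagA].
      - intros a b a' b' Ha Hb Ha' Hb' E. unfold f' in E.
        destruct (dec (A (fst (a, b)) /\ A (snd (a, b)))) as [[h1 h2]|N],
                 (dec (A (fst (a', b')) /\ A (snd (a', b')))) as [[h1' h2']|N']; simpl in *.
        + apply Vinj; auto.
        + exfalso. apply (ggA (f (f (gi a', gi b'), tag (a', b')))).
          * apply Vcl; [apply Vcl; apply giA; assumption | apply tagA].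
          * rewrite <- E. apply Vcl; auto.
        + exfalso. apply (ggA (f (f (gi a, gi b), tag (a, b)))).
          * apply Vcl; [apply Vcl; apply giA; assumption | apply tagA].
          * rewrite E. apply Vcl; auto.
        + apply gginj in E; try (apply Vcl; [apply Vcl; apply giA; assumption | apply tagA]).
          apply Vinj in E as [E1 E2]; try (apply Vcl; apply giA; assumption); try apply tagA.
          apply Vinj in E1 as [E3 E4]; try (apply giA; assumption).
          destruct (taginj (a, b) (a', b') N N' E2) as [I1 I2]; simpl in I1, I2.
          split; apply giinj; auto. }
    destruct (Hmax (exist _ _ V')) as [h1 _].
    + split; simpl.
      * intros x Hx; left; auto.
      * intros a b Ha Hb. unfold f'. simpl. destruct (dec _) as [_|N]; auto. exfalso; auto.
    + simpl in h1. apply (ggA (e 0) (Vbase 0)). apply h1. right. apply ggD. auto.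
Qed.

Definition inf_often (P : nat -> Prop) := forall N, exists n, N <= n /\ P n.

Lemma subseq (P : nat -> Prop) : inf_often P ->
  exists sg : nat -> nat, (forall k, sg k < sg (S k)) /\ forall k, P (sg k).
Proof.
intros H.
set (ch := fun N => proj1_sig (constructive_indefinite_description _ (H N))).
assert (Hch : forall N, N <= ch N /\ P (ch N)).
{ intros N. exact (proj2_sig (constructive_indefinite_description _ (H N))). }
exists (fix sg k := match k with 0 => ch 0 | S k' => ch (S (sg k')) end).
split.
- intros k. simpl. destruct (Hch (S ((fix sg (k : nat) : nat := match k with
      | 0 => ch 0 | S k' => ch (S (sg k')) end) k))). lia.
- intros [|k]; apply Hch.
Qed.

Lemma dichotomy (L : Type) :
  (exists e : nat -> L, inj e) \/ (forall s : nat -> L, exists v, inf_often (fun n => s n = v)).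
Proof.
destruct (classic (forall s : nat -> L, exists v, inf_often (fun n => s n = v))) as [H|H]; [right; auto|left].
apply not_all_ex_not in H as [s Hs].
assert (Hv : forall v, exists N, forall n, N <= n -> s n <> v).
{ intros v. apply NNPP. intros C. apply Hs. exists v. intros N.
  apply NNPP. intros C2. apply C. exists N. intros n Hn E. apply C2. exists n; auto. }
set (Nf := fun v => proj1_sig (constructive_indefinite_description _ (Hv v))).
assert (HNf : forall v n, Nf v <= n -> s n <> v).
{ intros v. exact (proj2_sig (constructive_indefinite_description _ (Hv v))). }
set (st := fix st k := match k with
  | 0 => (0, max 1 (Nf (s 0)))
  | S k' => (snd (st k'), max (S (snd (st k'))) (Nf (s (snd (st k'))))) end).
assert (Hst : forall k, fst (st k) < snd (st k) /\
   forall j, j <= k -> forall n, snd (st k) <= n -> s n <> s (fst (st j))).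
{ assert (E0 : st 0 = (0, max 1 (Nf (s 0)))) by reflexivity.
  assert (ES : forall k, st (S k) = (snd (st k), max (S (snd (st k))) (Nf (s (snd (st k)))))) by reflexivity.
  induction k as [|k [IH1 IH2]].
  - rewrite E0. cbn [fst snd]. split; [lia|]. intros j Hj n Hn. assert (j = 0) by lia. subst. rewrite E0. cbn [fst]. apply HNf. lia.
  - rewrite ES. cbn [fst snd]. split; [lia|].
    intros j Hj n Hn. destruct (Nat.eq_dec j (S k)) as [->|Hne].
    + rewrite ES. cbn [fst]. apply HNf. lia.
    + apply IH2; lia. }
assert (Hfs : forall k, fst (st (S k)) = snd (st k)) by reflexivity.
exists (fun k => s (fst (st k))).
assert (neq : forall j k, j < k -> s (fst (st k)) <> s (fst (st j))).
{ intros j k Hjk. destruct k as [|k]; [lia|]. rewrite Hfs. apply (proj2 (Hst k)); lia. }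
intros j k E. destruct (Nat.lt_total j k) as [h|[h|h]]; auto.
- exfalso. apply (neq j k h). auto.
- exfalso. apply (neq k j h). auto.
Qed.

Lemma chain_le {T} (le : T -> T -> Prop) (p : nat -> T) :
  is_partial_order le -> (forall n, le (p n) (p (S n))) ->
  forall i j, i <= j -> le (p i) (p j).
Proof.
intros [Hr [Ha Ht]] H i j Hij. induction Hij; auto. eapply Ht; eauto.
Qed.

Lemma chain_strict {T} (le : T -> T -> Prop) (p : nat -> T) :
  is_partial_order le -> (forall n, le (p n) (p (S n))) ->
  forall i j, i <= j -> p i = p j -> p i = p (S i) \/ i = j.
Proof.
intros Hpo H i j Hij E. destruct (Nat.eq_dec i j) as [->|Hne]; [right; auto|left].
pose proof Hpo as [Hr [Ha Ht]].
apply Ha; auto. rewrite E. apply chain_le; auto. lia.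
Qed.

Theorem lemma1 (L : Type) (P Q : Type) (leP : P -> P -> Prop) (leQ : Q -> Q -> Prop)
  (phi : P -> Q) :
  is_partial_order leP -> is_partial_order leQ ->
  monotonic leP leQ phi ->
  lambda_Noetherian L Q leQ ->
  (forall q : Q, lambda_Noetherian L {p : P | phi p = q} (sub_le (fun p => phi p = q) leP)) ->
  lambda_Noetherian L P leP.
Proof.
intros HP HQ Hmon [fQ HfQ] HG.
assert (Hc : exists c : L * L -> L, forall s : nat -> L * L,
   (forall n, c (s n) = c (s 0)) -> exists v, inf_often (fun n => s n = v)).
{ destruct (dichotomy L) as [[e He]|Hfin].
  - destruct (infinite_square L e He) as [c Hc]. exists c. intros s Hs. exists (s 0).
    intros N. exists N. split; auto.
  - exists fst. intros s Hs. destruct (Hfin (fun n => snd (s n))) as [b Hb].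
    exists (fst (s 0), b). intros N. destruct (Hb N) as [n [Hn E]]. exists n. split; auto.
    rewrite (surjective_pairing (s n)), E, <- (Hs n). reflexivity. }
destruct Hc as [c Hc].
set (G := fun q => proj1_sig (constructive_indefinite_description _ (HG q))).
assert (HGs : forall q xi, Noetherian {t | G q t = xi} (sub_le (fun t => G q t = xi) (sub_le (fun p => phi p = q) leP))).
{ intros q. exact (proj2_sig (constructive_indefinite_description _ (HG q))). }
set (gP := fun p => G (phi p) (exist _ p eq_refl)).
assert (transport : forall x q (e : phi x = q), G q (exist _ x e) = gP x).
{ intros x q e. subst q. reflexivity. }
exists (fun p => c (fQ (phi p), gP p)). intros xi [s Hs].
set (p := fun n => proj1_sig (s n)).
assert (Hp : forall n, leP (p n) (p (S n)) /\ p n <> p (S n)).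
{ intros n. destruct (Hs n) as [h1 h2]. split; [exact h1|]. intros E. apply h2. apply proj1_sig_inj. exact E. }
assert (Hxi : forall n, c (fQ (phi (p n)), gP (p n)) = xi).
{ intros n. exact (proj2_sig (s n)). }
destruct (Hc (fun n => (fQ (phi (p n)), gP (p n)))) as [[al be] Hv].
{ intros n. rewrite !Hxi. reflexivity. }
destruct (subseq _ Hv) as [sg [Hsg1 Hsg2]].
set (r := fun k => p (sg k)).
assert (Hsg : forall i j, i <= j -> sg i <= sg j).
{ intros i j Hij. induction Hij; auto. specialize (Hsg1 m). lia. }
assert (Hr : forall k, leP (r k) (r (S k)) /\ r k <> r (S k)).
{ intros k. unfold r. pose proof (Hsg1 k) as Hk.
  assert (Hle : forall n, leP (p n) (p (S n))) by (intros n; apply Hp).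
  split.
  - apply (chain_le leP p); auto; lia.
  - intros E. destruct (chain_strict leP p HP Hle (sg k) (sg (S k))) as [h|h]; auto; try lia.
    apply (proj2 (Hp (sg k))). auto. }
assert (Hrv : forall k, fQ (phi (r k)) = al /\ gP (r k) = be).
{ intros k. specialize (Hsg2 k). simpl in Hsg2. injection Hsg2. auto. }
assert (HrQ : forall k, leQ (phi (r k)) (phi (r (S k)))).
{ intros k. apply Hmon. apply Hr. }
destruct (classic (inf_often (fun k => phi (r k) <> phi (r (S k))))) as [Hio|Hnio].
- destruct (subseq _ Hio) as [tau [Ht1 Ht2]].
  apply (HfQ al).
  exists (fun k => exist (fun t => fQ t = al) (phi (r (tau k))) (proj1 (Hrv (tau k)))).
  intros k. unfold strict, sub_le. simpl. split.
  + apply (chain_le leQ (fun k => phi (r k))); auto. specialize (Ht1 k); lia.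
  + intros E. injection E as E.
    destruct (chain_strict leQ (fun k => phi (r k)) HQ HrQ (tau k) (tau (S k))) as [h|h]; auto.
    * specialize (Ht1 k); lia.
    * apply (Ht2 k). auto.
    * specialize (Ht1 k); lia.
- assert (HN : exists N, forall k, N <= k -> phi (r k) = phi (r (S k))).
  { apply NNPP. intros C. apply Hnio. intros N. apply NNPP. intros C2. apply C. exists N.
    intros k Hk. apply NNPP. intros C3. apply C2. exists k. auto. }
  destruct HN as [N HN].
  assert (Hq : forall k, phi (r (N + k)) = phi (r N)).
  { induction k as [|k IH]. { rewrite Nat.add_0_r; auto. }
    rewrite Nat.add_succ_r, <- HN by lia. auto. }
  set (q := phi (r N)).
  apply (HGs q be).
  exists (fun k => exist (fun t => G q t = be) (exist (fun x => phi x = q) (r (N + k)) (Hq k))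
           (eq_trans (transport _ _ (Hq k)) (proj2 (Hrv (N + k))))).
  intros k. unfold strict, sub_le. simpl. split.
  + rewrite Nat.add_succ_r. apply Hr.
  + intros E. injection E as E. apply (proj2 (Hr (N + k))). rewrite E, Nat.add_succ_r. reflexivity.
Qed.
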